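(* Let $\mathbf i\in\mathbb C$ with $\mathbf i^2=-1$ and let $\beta_m=[x^m]\Big(\frac{1+x}{1+\mathbf i}\prod_{k=0}^\infty\big(1+\mathbf i\,x^{2^k}\big)\Big)$ for $m\ge0$. For $n\ge1$, let $H(n)$ be the $n\times n$ Hankel matrix with entries $H(n)_{a,b}=\beta_{a+b+1}$, $0\le a,b<n$. Then $\det(H(n))=(-\mathbf i)^{\lfloor n/2\rfloor}$.
   Context: $[x^m]f$ denotes the coefficient of $x^m$ in the formal power series $f\in\mathbb C[[x]]$. *)

(* Defs.v *)
From mathcomp Require Import all_boot all_order all_algebra all_field.
Set Implicit Arguments. Unset Strict Implicit. Unset Printing Implicit Defensive.
Import GRing.Theory Num.Theory.
Local Open Scope ring_scope.

(* The coefficient of x^m of the infinite product only depends on the factors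
   with 2^k <= m, so it equals the coefficient of x^m of the finite product
   over k < m.+1 (all remaining factors are 1 mod x^(m+1)). *)
Definition beta (m : nat) : algC :=
  ((1 + 'X) * \prod_(k < m.+1) (1 + ('i)%:P * 'X^(2 ^ k)))`_m / (1 + 'i).

Definition hankelH (n : nat) : 'M[algC]_n :=
  \matrix_(a < n, b < n) beta (a + b + 1).

(* Main.v *)
Set Warnings "-notation-overridden,-ambiguous-paths".
Require Import Defs.
From mathcomp Require Import all_boot all_order all_algebra all_field.
From mathcomp Require Import ring zify.
Import GRing.Theory Num.Theory.
Local Open Scope ring_scope.
Set Implicit Arguments. Unset Strict Implicit. Unset Printing Implicit Defensive.

Lemma hi : ('i : algC) ^+ 2 = -1. Proof. exact: sqrCi. Qed.
Lemma ip1 : (1 + 'i : algC) != 0.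
Proof. apply/eqP=> h. have e : ('i : algC) = -1 by apply/eqP; rewrite -subr_eq0 opprK addrC h.
have := hi; rewrite e sqrrN expr1n => /eqP; rewrite -subr_eq0 opprK (_ : 1 + 1 = 2%:R) // pnatr_eq0 //. Qed.
Lemma im1 : (1 - 'i : algC) != 0.
Proof. apply/eqP=> h. have e : ('i : algC) = 1 by apply/eqP; rewrite -subr_eq0 -opprB h oppr0.
have := hi; rewrite e expr1n => /eqP; rewrite -subr_eq0 opprK (_ : 1 + 1 = 2%:R) // pnatr_eq0 //. Qed.

Definition Pi (N : nat) : {poly algC} := \prod_(k < N) (1 + ('i)%:P * 'X^(2 ^ k)).
Definition t (j : nat) : algC := (Pi j.+1)`_j.

Lemma Pi_comp N : Pi N \Po 'X^2 = \prod_(k < N) (1 + ('i)%:P * 'X^(2 ^ k.+1)).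
Proof.
rewrite /Pi; elim: N => [|N IH]; first by rewrite !big_ord0 comp_polyC.
rewrite !big_ord_recr /= comp_polyM IH; congr (_ * _).
by rewrite comp_polyD comp_polyC comp_polyM comp_polyC comp_Xn_poly -exprM expnS mulnC.
Qed.

Lemma PiS N : Pi N.+1 = (1 + ('i)%:P * 'X) * (Pi N \Po 'X^2).
Proof. by rewrite Pi_comp /Pi big_ord_recl expn0 expr1. Qed.

Lemma coef_PiS_even N j : (Pi N.+1)`_(j.*2) = (Pi N)`_j.
Proof.
rewrite PiS mulrDl mul1r coefD -mulrA coefCM coefXM coef_comp_poly_Xn //.
rewrite dvdn2 odd_double /= -muln2 mulnK //.
case: j => [|j] //=; first by rewrite mulr0 addr0.
by rewrite coef_comp_poly_Xn // dvdn2 /= oddM andbF /= mulr0 addr0.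
Qed.

Lemma coef_PiS_odd N j : (Pi N.+1)`_(j.*2.+1) = 'i * (Pi N)`_j.
Proof.
rewrite PiS mulrDl mul1r coefD -mulrA coefCM coefXM coef_comp_poly_Xn //.
rewrite dvdn2 /= odd_double /= add0r coef_comp_poly_Xn // dvdn2 odd_double /=.
by rewrite -muln2 mulnK.
Qed.

Lemma coef_Pi_stable N j : (j < 2 ^ N)%N -> (Pi N.+1)`_j = (Pi N)`_j.
Proof.
move=> hj; rewrite /Pi big_ord_recr /= mulrDr mulr1 coefD mulrCA coefCM coefMXn hj.
by rewrite mulr0 addr0.
Qed.

Lemma coef_Pi N j : (j < N)%N -> (Pi N)`_j = t j.
Proof.
move=> hj; rewrite /t; elim: N hj => [//|N IH] hj.
case: (ltngtP j N) => [lt|gt|->] //; last by lia.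
rewrite coef_Pi_stable ?IH //.
apply: (ltn_trans lt); exact: ltn_expl.
Qed.

Lemma t0 : t 0 = 1.
Proof. by rewrite /t /Pi big_ord1 expn0 expr1 coefD coef1 coefCM coefX mulr0 addr0. Qed.

Lemma tE j : t (j.*2) = t j.
Proof.
rewrite -(@coef_Pi (j.*2.+2)) ?coef_PiS_even ?coef_Pi //; lia.
Qed.

Lemma tO j : t (j.*2.+1) = 'i * t j.
Proof.
rewrite -(@coef_Pi (j.*2.+2)) ?coef_PiS_odd ?coef_Pi //; lia.
Qed.

Definition u (n : nat) : algC := beta n.+1.

Lemma uE n : u n = (t n.+1 + t n) / (1 + 'i).
Proof.
rewrite /u /beta -/(Pi _) mulrDl mul1r coefD coefXM /= !coef_Pi //.
Qed.

Lemma u_ev N : u (N.*2) = t N.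
Proof. rewrite uE tO tE. have h := hi. field: h. exact: ip1. Qed.
Lemma u_od N : u (N.*2.+1) = (t N.+1 + 'i * t N) / (1 + 'i).
Proof. by rewrite uE -doubleS tE tO. Qed.
Lemma u_ev2 N : u (N.*2.+2) = t N.+1.
Proof. by rewrite -doubleS u_ev. Qed.

Definition sp (n : nat) : algC := t n + t n.+1.
Definition sm (n : nat) : algC := t n - t n.+1.
Lemma sp_ev N : sp (N.*2) = (1 + 'i) * t N.
Proof. by rewrite /sp tE tO mulrDl mul1r. Qed.
Lemma sp_od N : sp (N.*2.+1) = 'i * t N + t N.+1.
Proof. by rewrite /sp tO -doubleS tE. Qed.
Lemma sp_ev2 N : sp (N.*2.+2) = (1 + 'i) * t N.+1.
Proof. by rewrite -doubleS sp_ev. Qed.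
Lemma sm_ev N : sm (N.*2) = (1 - 'i) * t N.
Proof. by rewrite /sm tE tO mulrBl mul1r. Qed.
Lemma sm_od N : sm (N.*2.+1) = 'i * t N - t N.+1.
Proof. by rewrite /sm tO -doubleS tE. Qed.
Lemma sm_ev2 N : sm (N.*2.+2) = (1 - 'i) * t N.+1.
Proof. by rewrite -doubleS sm_ev. Qed.

Definition lf (s : nat -> algC) (p : {poly algC}) : algC :=
  \sum_(i < size p) p`_i * s i.

Lemma lf_widen s (p : {poly algC}) N : (size p <= N)%N -> lf s p = \sum_(i < N) p`_i * s i.
Proof.
move=> hN; rewrite /lf (big_ord_widen N (fun i => p`_i * s i) hN).
rewrite big_mkcond; apply: eq_bigr => i _; case: ifP => // /negbT.
by rewrite -leqNgt => /(nth_default 0) ->; rewrite mul0r.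
Qed.

Lemma lfD s (p q : {poly algC}) : lf s (p + q) = lf s p + lf s q.
Proof.
rewrite !(@lf_widen s _ (maxn (size p) (size q))) ?leq_maxl ?leq_maxr ?size_polyD //.
by rewrite -big_split; apply: eq_bigr => i _; rewrite coefD mulrDl.
Qed.

Lemma lf0 s : lf s 0 = 0.
Proof. by rewrite /lf size_poly0 big_ord0. Qed.

Lemma lfZ s a (p : {poly algC}) : lf s (a *: p) = a * lf s p.
Proof.
rewrite (@lf_widen s _ (size p)) ?size_scale_leq // /lf mulr_sumr.
by apply: eq_bigr => i _; rewrite coefZ mulrA.
Qed.

Lemma lfX s n : lf s 'X^n = s n.
Proof.
rewrite /lf size_polyXn big_ord_recr /= coefXn eqxx mul1r big1 ?add0r //.
by move=> i _; rewrite coefXn /= (ltn_eqF (ltn_ord i)) mul0r.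
Qed.

Lemma lf_sum s n (F : 'I_n -> {poly algC}) : lf s (\sum_i F i) = \sum_i lf s (F i).
Proof. exact: (big_morph _ (lfD s) (lf0 s)). Qed.

Definition bi (a b : algC) (m : nat) : {poly algC} := a *: 'X^m + b *: 'X^(m.+1).

Lemma lf_bi s a b c d m n :
  lf s (bi a b m * bi c d n) =
  a * c * s (m + n)%N + (a * d + b * c) * s (m + n).+1 + b * d * s (m + n).+2.
Proof.
rewrite /bi !mulrDl !mulrDr -!scalerAl -!scalerAr -!exprD !lfD !lfZ !lfX.
rewrite !addSn !addnS; ring.
Qed.

Lemma lf_bi2 s a b c d m n :
  lf s (bi a b m.*2 * bi c d n.*2) =
  a * c * s (m + n).*2 + (a * d + b * c) * s (m + n).*2.+1 + b * d * s (m + n).*2.+2.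
Proof. by rewrite lf_bi doubleD. Qed.

Definition gram (s : nat -> algC) n (ps : 'I_n -> {poly algC}) : 'M[algC]_n :=
  \matrix_(i, j) lf s (ps i * ps j).

Lemma gram_change s n (ps qs : 'I_n -> {poly algC}) (P : 'M[algC]_n) :
  (forall j, qs j = \sum_i P i j *: ps i) ->
  gram s qs = P^T *m gram s ps *m P.
Proof.
move=> hq; apply/matrixP => a b; rewrite !mxE !hq mulr_suml lf_sum.
under eq_bigr do rewrite mulr_sumr lf_sum.
rewrite exchange_big; apply: eq_bigr => j _; rewrite !mxE mulr_suml.
apply: eq_bigr => i _; rewrite !mxE -scalerAl -scalerAr !lfZ; ring.
Qed.

Lemma det_gram_change s n (ps qs : 'I_n -> {poly algC}) (P : 'M[algC]_n) :
  (forall j, qs j = \sum_i P i j *: ps i) ->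
  \det (gram s qs) = \det P ^+ 2 * \det (gram s ps).
Proof.
move=> hq; rewrite (gram_change s hq) !det_mulmx det_tr; ring.
Qed.

Lemma det_reindex n (sg : 'I_n -> 'I_n) (M : 'M[algC]_n) :
  injective sg -> \det (\matrix_(i, j) M (sg i) (sg j)) = \det M.
Proof.
move=> inj; set p := perm.perm inj.
have -> : \matrix_(i, j) M (sg i) (sg j) = row_perm p (col_perm p M).
  by apply/matrixP => i j; rewrite !mxE !perm.permE.
rewrite row_permE col_permE !det_mulmx !det_perm perm.odd_permV.
by rewrite mulrC -mulrA -signr_addb addbb mulr1.
Qed.

Definition mk c f (F G : nat -> {poly algC}) : 'I_(c + f) -> {poly algC} :=
  fun i => match split i with inl p => F (p : nat) | inr q => G (q : nat) end.

Lemma mkl c f F G (p : 'I_c) : mk (f := f) F G (lshift f p) = F p.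
Proof. by rewrite /mk (unsplitK (inl _ p)). Qed.
Lemma mkr c f F G (q : 'I_f) : mk (c := c) F G (rshift c q) = G q.
Proof. by rewrite /mk (unsplitK (inr _ q)). Qed.

Lemma gram_mk s c f F G :
  gram s (mk (c := c) (f := f) F G) =
  block_mx (\matrix_(i < c, j < c) lf s (F i * F j))
           (\matrix_(i < c, j < f) lf s (F i * G j))
           (\matrix_(i < f, j < c) lf s (G i * F j))
           (\matrix_(i < f, j < f) lf s (G i * G j)).
Proof.
rewrite -[LHS]submxK; congr block_mx; apply/matrixP => i j;
by rewrite !mxE ?mkl ?mkr.
Qed.

Lemma sum_mk c f F G (P : 'M[algC]_(c + f)) j :
  \sum_i P i j *: mk F G i =
  \sum_(i < c) P (lshift f i) j *: F i + \sum_(i < f) P (rshift c i) j *: G i.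
Proof.
rewrite big_split_ord /=; congr (_ + _); apply: eq_bigr => i _;
by rewrite ?mkl ?mkr.
Qed.

Lemma sum_kron n (F : nat -> {poly algC}) x q :
  \sum_(i < n) (x *+ ((i : nat) == q)) *: F i = if (q < n)%N then x *: F q else 0.
Proof.
rewrite (eq_bigr (fun i : 'I_n => if (i : nat) == q then x *: F i else 0)).
  by rewrite -big_mkcond (big_ord1_eq _ (fun j => x *: F j)).
by move=> i _; case: eqP => _; rewrite ?mulr1n ?mulr0n ?scale0r.
Qed.

Lemma sum_zero n (F : nat -> {poly algC}) :
  \sum_(i < n) (0 : 'M[algC]_n) i i *: F i = 0.
Proof. by apply: big1 => i _; rewrite mxE scale0r. Qed.

Definition dg m n (x : algC) : 'M[algC]_(m, n) := \matrix_(i, j) (x *+ ((i : nat) == j)).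

Lemma dgE n x : dg n n x = x%:M.
Proof. by apply/matrixP => i j; rewrite !mxE. Qed.

Lemma sum_dg m n (F : nat -> {poly algC}) x (q : 'I_n) :
  \sum_(i < m) dg m n x i q *: F i = if (q < m)%N then x *: F q else 0.
Proof. rewrite -sum_kron; apply: eq_bigr => i _; by rewrite mxE. Qed.

Lemma sum_0 m n (F : nat -> {poly algC}) (q : 'I_n) :
  \sum_(i < m) (0 : 'M[algC]_(m, n)) i q *: F i = 0.
Proof. by apply: big1 => i _; rewrite mxE scale0r. Qed.

Lemma bi_scal a b m : bi a b m = a *: 'X^m + b *: 'X^(m.+1).
Proof. by []. Qed.

Unset Implicit Arguments.
Definition evX (p : nat) : {poly algC} := 'X^(p.*2).
Definition odX (q : nat) : {poly algC} := 'X^(q.*2.+1).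
Definition ebF (p : nat) : {poly algC} := bi 1 0 p.*2.
Definition ebG (a b : algC) (q : nat) : {poly algC} := bi b a q.*2.

Definition bm c f := mk (c := c) (f := f) evX odX.
Definition eb c f a b := mk (c := c) (f := f) ebF (ebG a b).
Definition Pe c f a b : 'M[algC]_(c + f) := block_mx (dg c c 1) (dg c f b) 0 (dg f f a).

Lemma det_Pe c f a b : \det (Pe c f a b) = a ^+ f.
Proof. by rewrite det_ublock !dgE !det_scalar expr1n mul1r. Qed.

Lemma eb_change c f a b : (f <= c)%N ->
  forall j, eb c f a b j = \sum_i Pe c f a b i j *: bm c f i.
Proof.
move=> hfc j; rewrite sum_mk /eb /bm; case: (split_ordP j) => p ->; rewrite ?mkl ?mkr.
  rewrite (eq_bigr (fun i : 'I_c => dg c c 1 i p *: evX i)); last by move=> i _; rewrite block_mxEul.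
  rewrite (eq_bigr (fun i : 'I_f => (0 : 'M[algC]_(f, c)) i p *: odX i)); last by move=> i _; rewrite block_mxEdl.
  by rewrite sum_dg sum_0 ltn_ord addr0 /ebF /evX /bi scale1r scale0r addr0.
rewrite (eq_bigr (fun i : 'I_c => dg c f b i p *: evX i)); last by move=> i _; rewrite block_mxEur.
rewrite (eq_bigr (fun i : 'I_f => dg f f a i p *: odX i)); last by move=> i _; rewrite block_mxEdr.
by rewrite !sum_dg ltn_ord (leq_trans (ltn_ord p) hfc).
Qed.

Definition hk (s : nat -> algC) n : 'M[algC]_n := \matrix_(i, j) s (i + j)%N.

Definition sgn c f (i : 'I_(c + f)) : nat :=
  match split i with inl p => (p : nat).*2 | inr q => (q : nat).*2.+1 end.

Lemma sgn_lt c f i : (f <= c <= f.+1)%N -> (sgn c f i < c + f)%N.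
Proof.
move=> /andP [h1 h2]; rewrite /sgn; case: (split_ordP i) => p _.
  have := ltn_ord p; rewrite -!muln2; lia.
have := ltn_ord p; rewrite -!muln2; lia.
Qed.

Lemma sgn_inj c f : injective (sgn c f).
Proof.
move=> i j; rewrite /sgn.
case: (split_ordP i) => p ->; case: (split_ordP j) => q -> /=.
- by move/double_inj => /val_inj ->.
- by move/(congr1 odd); rewrite /= !odd_double.
- by move/(congr1 odd); rewrite /= !odd_double.
- by move=> [] /double_inj /val_inj ->.
Qed.

Lemma bm_X c f i : bm c f i = 'X^(sgn c f i).
Proof. by rewrite /bm /mk /sgn; case: (split i). Qed.

Lemma det_gram_bm s c f : (f <= c <= f.+1)%N ->
  \det (gram s (bm c f)) = \det (hk s (c + f)).
Proof.
move=> h; pose sg (i : 'I_(c + f)) : 'I_(c + f) := insubd i (sgn c f i).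
have sgE i : (sg i : nat) = sgn c f i by rewrite val_insubd sgn_lt.
have sginj : injective sg.
  by move=> i j e; apply: (@sgn_inj c f); rewrite -!sgE e.
rewrite -(det_reindex (hk s (c + f)) sginj); congr (\det _); apply/matrixP => i j.
by rewrite /gram /hk !mxE !bm_X -exprD lfX !sgE.
Qed.

Definition Phi c f : 'M[algC]_(c + f) :=
  block_mx (\matrix_(i < c, j < c) t (i + j)%N) (\matrix_(i < c, j < f) t (i + j).+1)
           (\matrix_(i < f, j < c) t (i + j).+1) (\matrix_(i < f, j < f) t (i + j)%N).

Lemma gram_u_eb c f : gram u (eb c f (1 + 'i) (- 'i)) = Phi c f.
Proof.
have h := hi; have h1 := ip1.
rewrite /eb gram_mk /Phi; congr block_mx; apply/matrixP => i j;
rewrite !mxE /ebF /ebG lf_bi2 u_ev u_od u_ev2; field: h; exact: ip1.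
Qed.

Lemma gram_sp_eb c f : gram sp (eb c f (1 + 'i) (- 'i)) = (1 + 'i) *: Phi c f.
Proof.
have h := hi.
rewrite /eb gram_mk /Phi scale_block_mx; congr block_mx; apply/matrixP => i j;
rewrite !mxE /ebF /ebG lf_bi2 sp_ev sp_od sp_ev2; ring: h.
Qed.

Lemma gram_sm_eb c f : gram sm (eb c f ('i - 1) 'i) = (1 - 'i) *: Phi c f.
Proof.
have h := hi.
rewrite /eb gram_mk /Phi scale_block_mx; congr block_mx; apply/matrixP => i j;
rewrite !mxE /ebF /ebG lf_bi2 sm_ev sm_od sm_ev2; ring: h.
Qed.

Lemma stepA c f : (f <= c <= f.+1)%N ->
  \det (Phi c f) = (1 + 'i) ^+ (f.*2) * \det (hk u (c + f)).
Proof.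
move=> h; have hfc : (f <= c)%N by case/andP: h.
rewrite -gram_u_eb (det_gram_change u (eb_change c f (1 + 'i) (- 'i) hfc)).
by rewrite det_Pe det_gram_bm // -exprM muln2.
Qed.

Lemma stepBp c f : (f <= c <= f.+1)%N ->
  (1 + 'i) ^+ (c + f) * \det (Phi c f) = (1 + 'i) ^+ (f.*2) * \det (hk sp (c + f)).
Proof.
move=> h; have hfc : (f <= c)%N by case/andP: h.
rewrite -detZ -gram_sp_eb (det_gram_change sp (eb_change c f (1 + 'i) (- 'i) hfc)).
by rewrite det_Pe det_gram_bm // -exprM muln2.
Qed.

Lemma stepBm c f : (f <= c <= f.+1)%N ->
  (1 - 'i) ^+ (c + f) * \det (Phi c f) = ('i - 1) ^+ (f.*2) * \det (hk sm (c + f)).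
Proof.
move=> h; have hfc : (f <= c)%N by case/andP: h.
rewrite -detZ -gram_sm_eb (det_gram_change sm (eb_change c f ('i - 1) 'i hfc)).
by rewrite det_Pe det_gram_bm // -exprM muln2.
Qed.

Lemma bi_lin x y a b c d m :
  x *: bi a b m + y *: bi c d m = bi (x * a + y * c) (x * b + y * d) m.
Proof.
rewrite /bi !scalerDr !scalerA addrACA -!scalerDl //.
Qed.

Definition wsF f (p : nat) : {poly algC} :=
  if (p < f)%N then bi (1 - 'i) (1 + 'i) p.*2 else bi 2 0 p.*2.
Definition wsG (q : nat) : {poly algC} := bi (1 + 'i) (- (1 + 'i)) q.*2.
Definition b1 c f := mk (c := c) (f := f) ebF wsG.
Definition ws c f := mk (c := c) (f := f) (wsF f) wsG.
Definition P1 c f : 'M[algC]_(c + f) := block_mx (dg c c 1) (dg c f 1) 0 (dg f f (-1)).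
Definition P2 c f : 'M[algC]_(c + f) := block_mx (dg c c 2) 0 (dg f c (-1)) (dg f f 1).

Lemma det_P1 c f : \det (P1 c f) = (-1) ^+ f.
Proof. by rewrite det_ublock !dgE !det_scalar expr1n mul1r. Qed.
Lemma det_P2 c f : \det (P2 c f) = 2 ^+ c.
Proof. by rewrite det_lblock !dgE !det_scalar expr1n mulr1. Qed.

Lemma b1_change c f : (f <= c)%N ->
  forall j, b1 c f j = \sum_i P1 c f i j *: eb c f (1 + 'i) (- 'i) i.
Proof.
move=> hfc j; rewrite sum_mk /eb /b1; case: (split_ordP j) => p ->; rewrite ?mkl ?mkr.
  rewrite (eq_bigr (fun i : 'I_c => dg c c 1 i p *: ebF i)); last by move=> i _; rewrite block_mxEul.
  rewrite (eq_bigr (fun i : 'I_f => (0 : 'M[algC]_(f, c)) i p *: ebG (1 + 'i) (- 'i) i)); last by move=> i _; rewrite block_mxEdl.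
  by rewrite sum_dg sum_0 ltn_ord addr0 scale1r.
rewrite (eq_bigr (fun i : 'I_c => dg c f 1 i p *: ebF i)); last by move=> i _; rewrite block_mxEur.
rewrite (eq_bigr (fun i : 'I_f => dg f f (-1) i p *: ebG (1 + 'i) (- 'i) i)); last by move=> i _; rewrite block_mxEdr.
rewrite !sum_dg ltn_ord (leq_trans (ltn_ord p) hfc) /ebF /ebG /wsG bi_lin.
congr bi; ring.
Qed.

Lemma ws_change c f : (f <= c)%N ->
  forall j, ws c f j = \sum_i P2 c f i j *: b1 c f i.
Proof.
move=> hfc j; rewrite sum_mk /ws /b1; case: (split_ordP j) => p ->; rewrite ?mkl ?mkr.
  rewrite (eq_bigr (fun i : 'I_c => dg c c 2 i p *: ebF i)); last by move=> i _; rewrite block_mxEul.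
  rewrite (eq_bigr (fun i : 'I_f => dg f c (-1) i p *: wsG i)); last by move=> i _; rewrite block_mxEdl.
  rewrite !sum_dg ltn_ord /wsF /ebF /wsG.
  case: ifP => _; last by rewrite addr0 /bi !scalerDr !scalerA mulr1 mulr0.
  by rewrite bi_lin; congr bi; ring.
rewrite (eq_bigr (fun i : 'I_c => (0 : 'M[algC]_(c, f)) i p *: ebF i)); last by move=> i _; rewrite block_mxEur.
rewrite (eq_bigr (fun i : 'I_f => dg f f 1 i p *: wsG i)); last by move=> i _; rewrite block_mxEdr.
by rewrite sum_0 sum_dg ltn_ord add0r scale1r.
Qed.

Lemma det_gram_ws c f : (f <= c)%N ->
  \det (gram u (ws c f)) = 4 ^+ c * \det (Phi c f).
Proof.
move=> hfc; rewrite (det_gram_change u (ws_change c f hfc)) (det_gram_change u (b1_change c f hfc)).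
have e1 : ((-1) ^+ f) ^+ 2 = 1 :> algC by rewrite -exprM mulnC exprM sqrrN !expr1n.
have e2 : ((2 : algC) ^+ c) ^+ 2 = 4 ^+ c.
  by rewrite -exprM mulnC exprM expr2 -natrM.
by rewrite gram_u_eb det_P1 det_P2 e1 e2 mul1r.
Qed.

Lemma gram_u_ws c f :
  gram u (ws c f) =
  block_mx (\matrix_(i < c, j < c) (if ((i < f) || (j < f))%N then 2 * sp (i + j) else 4 * t (i + j)))
           (\matrix_(i < c, j < f) (if (i < f)%N then 0 else 2 * sm (i + j)))
           (\matrix_(i < f, j < c) (if (j < f)%N then 0 else 2 * sm (i + j)))
           (\matrix_(i < f, j < f) (2 * sm (i + j))).
Proof.
have h := hi.
rewrite /ws gram_mk; congr block_mx; apply/matrixP => i j; rewrite !mxE /wsF /wsG;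
  try (case: (i < f)%N); try (case: (j < f)%N); rewrite /= lf_bi2 u_ev u_od u_ev2 /sp /sm;
  field: h; exact: ip1.
Qed.

Lemma four_neq0 : (4 : algC) != 0. Proof. by rewrite pnatr_eq0. Qed.

Lemma stepC_even k : \det (Phi k k) = \det (hk sp k) * \det (hk sm k).
Proof.
have := det_gram_ws k k (leqnn k); rewrite gram_u_ws.
have -> : (\matrix_(i < k, j < k) (if ((i < k) || (j < k))%N then 2 * sp (i + j) else 4 * t (i + j))) = 2 *: hk sp k.
  by apply/matrixP => i j; rewrite !mxE ltn_ord.
have -> : (\matrix_(i < k, j < k) (if (i < k)%N then 0 else 2 * sm (i + j))) = 0.
  by apply/matrixP => i j; rewrite !mxE ltn_ord.
have -> : (\matrix_(i < k, j < k) (if (j < k)%N then 0 else 2 * sm (i + j))) = 0.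
  by apply/matrixP => i j; rewrite !mxE ltn_ord.
have -> : (\matrix_(i < k, j < k) (2 * sm (i + j))) = 2 *: hk sm k.
  by apply/matrixP => i j; rewrite !mxE.
rewrite det_ublock !detZ => e.
apply: (mulfI (expf_neq0 k four_neq0)); rewrite -e.
rewrite (_ : (4 : algC) = 2 * 2); last by rewrite -natrM.
rewrite exprMn; ring.
Qed.

Definition gM k (x y : nat) : algC :=
  if (x < k.+1)%N then
    (if (y < k.+1)%N then (if ((x < k) || (y < k))%N then 2 * sp (x + y) else 4 * t (x + y))
     else (if (x < k)%N then 0 else 2 * sm (x + (y - k.+1))))
  else
    (if (y < k.+1)%N then (if (y < k)%N then 0 else 2 * sm ((x - k.+1) + y))
     else 2 * sm ((x - k.+1) + (y - k.+1))).

Lemma gram_ws_odd k :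
  gram u (ws k.+1 k) = \matrix_(x, y) gM k x y.
Proof.
rewrite gram_u_ws -[RHS]submxK; congr block_mx; apply/matrixP => i j;
rewrite !mxE /gM /= ?ltn_ord ?(ltnNge (k.+1 + _)) ?leq_addr /= ?addKn //.
Qed.

Lemma row'_eq n (A B : 'M[algC]_n.+1) i0 :
  (forall i j, i != i0 -> B i j = A i j) -> row' i0 B = row' i0 A.
Proof. by move=> h; apply/matrixP => i j; rewrite !mxE h // eq_sym neq_lift. Qed.

Section Odd.
Variable k : nat.

Definition M0 : 'M[algC]_(k.+1 + k) := \matrix_(x, y) gM k x y.
Definition M1 : 'M[algC]_(k.+1 + k) :=
  \matrix_(x, y) (if (x : nat) == k then (if (y < k.+1)%N then 2 * sp (k + y) else 0)
                  else gM k x y).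
Definition M2 : 'M[algC]_(k.+1 + k) :=
  \matrix_(x, y) (if (x : nat) == k then
                    (if (y < k.+1)%N then (if (y : nat) == k then 2 * sm (k + k) else 0)
                     else 2 * sm (k + (y - k.+1)))
                  else gM k x y).

Lemma M0_split : \det M0 = \det M1 + \det M2.
Proof.
pose i0 : 'I_(k.+1 + k) := lshift k ord_max.
have -> : \det M0 = 1 * \det M1 + 1 * \det M2; last by rewrite !mul1r.
apply: (determinant_multilinear (i0 := i0)).
- apply/rowP => j; rewrite !mxE !mul1r /i0 /= eqxx /gM ltnSn ltnn /=.
  case: (ltngtP (j : nat) k) => hj.
  + have h1 : (j < k.+1)%N by lia.
    by rewrite h1 addr0.
  + have h1 : (j < k.+1)%N = false by lia.
    by rewrite h1 add0r.
  + rewrite hj ltnSn /sp /sm; ring.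
- apply: row'_eq => i j hi0; rewrite !mxE.
  have -> : ((i : nat) == k) = false.
    by apply/negbTE; apply: contra hi0 => /eqP e; apply/eqP/val_inj.
  by [].
- apply: row'_eq => i j hi0; rewrite !mxE.
  have -> : ((i : nat) == k) = false.
    by apply/negbTE; apply: contra hi0 => /eqP e; apply/eqP/val_inj.
  by [].
Qed.


Lemma det_M1 : \det M1 = 2 ^+ k.+1 * \det (hk sp k.+1) * (2 ^+ k * \det (hk sm k)).
Proof.
rewrite -[M1]submxK.
have -> : ulsubmx M1 = 2 *: hk sp k.+1.
  apply/matrixP => a b; rewrite !mxE /= ltn_ord.
  case: (ltngtP (a : nat) k) => ha.
  - by rewrite /gM !ltn_ord ha.
  - by have := ltn_ord a; lia.
  - by rewrite [in RHS]ha.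
have -> : ursubmx M1 = 0.
  apply/matrixP => a b; rewrite !mxE /= (ltnNge (k.+1 + b)) leq_addr /=.
  case: (ltngtP (a : nat) k) => ha //.
  - by rewrite /gM ltn_ord ha (ltnNge (k.+1 + b)) leq_addr.
  - by have := ltn_ord a; lia.
have -> : drsubmx M1 = 2 *: hk sm k.
  apply/matrixP => a b; rewrite !mxE /=.
  have -> : (k.+1 + a == k)%N = false by lia.
  by rewrite /gM !(ltnNge (k.+1 + _)) !leq_addr /= !addKn.
by rewrite det_lblock !detZ.
Qed.


Definition s2n (x : nat) : nat := if (x < k)%N then (k.+1 + x)%N else if x == k then k else (x - k.+1)%N.

Ltac crush := intros; repeat (case: ifP => ?); rewrite ?eqxx //;
  try lia; try (exfalso; lia); try (congr (_ * _); congr (_ _); lia).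

Lemma s2n_lt x : (x < k)%N -> s2n x = (k.+1 + x)%N.
Proof. by rewrite /s2n => ->. Qed.
Lemma s2n_k : s2n k = k.
Proof. by rewrite /s2n ltnn eqxx. Qed.
Lemma s2n_r x : s2n (k.+1 + x) = x.
Proof. rewrite /s2n ifF; last by lia. rewrite ifF; last by lia. lia. Qed.

Lemma s2n_l (a : 'I_k.+1) : s2n a = if (a < k)%N then (k.+1 + a)%N else k.
Proof.
rewrite /s2n; case: ifP => // h; have e : (a : nat) == k by have := ltn_ord a; lia.
by rewrite e.
Qed.

Ltac crush2 := repeat (case: ifP => ?); intros; rewrite ?eqxx //;
  try lia; try (exfalso; lia); try (congr (_ * _); congr (_ _); lia).

Lemma det_M2 : \det M2 = 2 ^+ k.+1 * \det (hk sm k.+1) * (2 ^+ k * \det (hk sp k)).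
Proof.
pose sg (x : 'I_(k.+1 + k)) : 'I_(k.+1 + k) := insubd x (s2n x).
have sgE x : (sg x : nat) = s2n x.
  rewrite val_insubd; have := ltn_ord x; rewrite /s2n => h.
  have -> // : (s2n x < k.+1 + k)%N by rewrite /s2n; crush.
have sginj : injective sg.
  move=> x y e; apply: ord_inj; move: e => /(congr1 (@nat_of_ord _)); rewrite !sgE /s2n.
  have := ltn_ord x; have := ltn_ord y; repeat (case: ifP => ?); intros; lia.
rewrite -(det_reindex M2 sginj) -[X in \det X]submxK.
have -> : ulsubmx (\matrix_(i, j) M2 (sg i) (sg j)) = 2 *: hk sm k.+1.
  apply/matrixP => a b; rewrite !mxE !sgE /= !s2n_l.
  move: (ltn_ord a) (ltn_ord b) => Ha Hb.
  case: (ltnP a k) => ha; case: (ltnP b k) => hb; rewrite /gM /=; crush2.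
have -> : ursubmx (\matrix_(i, j) M2 (sg i) (sg j)) = 0.
  apply/matrixP => a b; rewrite !mxE !sgE /= s2n_r s2n_l.
  move: (ltn_ord a) (ltn_ord b) => Ha Hb.
  case: (ltnP a k) => ha; rewrite /gM /=; crush2.
have -> : drsubmx (\matrix_(i, j) M2 (sg i) (sg j)) = 2 *: hk sp k.
  apply/matrixP => a b; rewrite !mxE !sgE /= !s2n_r.
  have := ltn_ord a; have := ltn_ord b; rewrite /gM; crush2.
by rewrite det_lblock !detZ.
Qed.

End Odd.

Lemma stepC_odd k :
  4 ^+ k.+1 * \det (Phi k.+1 k) =
  2 ^+ k.+1 * \det (hk sp k.+1) * (2 ^+ k * \det (hk sm k))
  + 2 ^+ k.+1 * \det (hk sm k.+1) * (2 ^+ k * \det (hk sp k)).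
Proof.
rewrite -det_gram_ws ?leqnSn // gram_ws_odd.
by rewrite (M0_split k) det_M1 det_M2.
Qed.

Definition phi c f := \det (Phi c f).

Lemma two_i : (1 + 'i) ^+ 2 = 2 * 'i :> algC.
Proof. have h := hi; ring: h. Qed.
Lemma two_mi : ('i - 1) ^+ 2 = - (2 * 'i) :> algC.
Proof. have h := hi; ring: h. Qed.
Lemma two_mi' : (1 - 'i) ^+ 2 = - (2 * 'i) :> algC.
Proof. have h := hi; ring: h. Qed.

Lemma ex2 (x : algC) j : x ^+ (j.*2) = (x ^+ 2) ^+ j.
Proof. by rewrite -mul2n exprM. Qed.

Lemma D_even j : phi j j = 2 ^+ j ->
  \det (hk sp (j + j)) = 2 ^+ j /\ \det (hk sm (j + j)) = 2 ^+ j.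
Proof.
move=> hp; have hj : (j <= j <= j.+1)%N by rewrite leqnn leqnSn.
split.
  apply: (mulfI (expf_neq0 (j.*2) ip1)); rewrite -stepBp // -/(phi _ _) hp.
  by rewrite addnn.
apply: (mulfI (expf_neq0 (j.*2) im1)).
have e : (1 - 'i) ^+ (j.*2) = ('i - 1) ^+ (j.*2) :> algC by rewrite !ex2 two_mi two_mi'.
rewrite [in LHS]e -stepBm // -/(phi _ _) hp.
by rewrite addnn.
Qed.

Lemma D_odd j : phi j.+1 j = 2 ^+ j ->
  \det (hk sp (j.+1 + j)) = (1 + 'i) * 2 ^+ j /\
  \det (hk sm (j.+1 + j)) = (1 - 'i) * 2 ^+ j.
Proof.
move=> hp; have hj : (j <= j.+1 <= j.+1)%N by rewrite leqnSn leqnn.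
split.
  apply: (mulfI (expf_neq0 (j.*2) ip1)); rewrite -stepBp // -/(phi _ _) hp.
  by rewrite addSn addnn exprS mulrCA mulrA.
apply: (mulfI (expf_neq0 (j.*2) im1)).
have e : (1 - 'i) ^+ (j.*2) = ('i - 1) ^+ (j.*2) :> algC by rewrite !ex2 two_mi two_mi'.
rewrite [in LHS]e -stepBm // -/(phi _ _) hp.
by rewrite addSn addnn exprS mulrCA mulrA.
Qed.

Lemma nat_split m : exists j, m = (j + j)%N \/ m = (j.+1 + j)%N.
Proof.
exists m./2; move: (odd_double_half m); case: (odd m) => /= e; [right|left];
rewrite -[in LHS]e -addnn //.
Qed.

Lemma four22 : (4 : algC) = 2 * 2. Proof. by rewrite -natrM. Qed.

Lemma phi_main k : phi k k = 2 ^+ k /\ phi k.+1 k = 2 ^+ k.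
Proof.
have h := hi.
elim/ltn_ind: k => k IH.
have P1 : phi k k = 2 ^+ k.
  case: k IH => [|k] IH; first by rewrite /phi det_mx00 expr0.
  rewrite /phi stepC_even.
  have [j [ej|ej]] := nat_split k.+1.
    have [h1 _] := IH j (ltac:(lia)).
    by rewrite ej; have [-> ->] := D_even j h1; rewrite -exprD.
  have [_ h2] := IH j (ltac:(lia)).
  rewrite ej; have [-> ->] := D_odd j h2.
  rewrite addSn exprS exprD; ring: h.
split => //.
case: k IH P1 => [|k] IH P1.
  rewrite /phi stepA // expr0 mul1r det_mx11 mxE /=.
  by have -> : u 0 = t 0 := u_ev 0; rewrite t0.
apply: (mulfI (expf_neq0 k.+2 four_neq0)); rewrite /phi stepC_odd.
have [j [ej|ej]] := nat_split k.+1.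
- have [h1 h2] := IH j (ltac:(lia)).
  have [Hp Hm] : \det (hk sp k.+1) = 2 ^+ j /\ \det (hk sm k.+1) = 2 ^+ j.
    by rewrite ej; apply: D_even.
  have [Hp1 Hm1] : \det (hk sp k.+2) = (1 + 'i) * 2 ^+ j /\ \det (hk sm k.+2) = (1 - 'i) * 2 ^+ j.
    by rewrite (_ : k.+2 = j.+1 + j)%N; [apply: D_odd | lia].
  rewrite Hp Hm Hp1 Hm1 ej four22 exprMn !exprS !exprD; ring: h.
- have [h1 h2] := IH j (ltac:(lia)).
  have [Hp Hm] : \det (hk sp k.+1) = (1 + 'i) * 2 ^+ j /\ \det (hk sm k.+1) = (1 - 'i) * 2 ^+ j.
    by rewrite ej; apply: D_odd.
  have h3 : phi j.+1 j.+1 = 2 ^+ j.+1.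
    case: (ltnP j.+1 k.+1) => hj; first by case: (IH j.+1 hj).
    have -> : j.+1 = k.+1 by lia.
    exact: P1.
  have [Hp1 Hm1] : \det (hk sp k.+2) = 2 ^+ j.+1 /\ \det (hk sm k.+2) = 2 ^+ j.+1.
    by rewrite (_ : k.+2 = j.+1 + j.+1)%N; [apply: D_even | lia].
  rewrite Hp Hm Hp1 Hm1 ej four22 exprMn !exprS !exprD; ring: h.
Qed.

Lemma hankel_hk n : hankelH n = hk u n.
Proof. by apply/matrixP => a b; rewrite !mxE /u addn1. Qed.

Theorem mainTheorem20 (n : nat) : (1 <= n)%N ->
  \det (hankelH n) = (- 'i) ^+ (n./2).
Proof.
move=> _; have h := hi.
rewrite hankel_hk.
have [j [ej|ej]] := nat_split n; rewrite ej.
- have hj : (j <= j <= j.+1)%N by rewrite leqnn leqnSn.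
  have := stepA j j hj; rewrite -/(phi _ _) (proj1 (phi_main j)) => e.
  apply: (mulfI (expf_neq0 (j.*2) ip1)); rewrite -e.
  rewrite addnn -[(j.*2)./2]/(j.*2./2) doubleK ex2 two_i -exprMn.
  congr (_ ^+ _); ring: h.
- have hj : (j <= j.+1 <= j.+1)%N by rewrite leqnSn leqnn.
  have := stepA j.+1 j hj; rewrite -/(phi _ _) (proj2 (phi_main j)) => e.
  apply: (mulfI (expf_neq0 (j.*2) ip1)); rewrite -e.
  rewrite addSn addnn /= uphalf_double ex2 two_i -exprMn.
  congr (_ ^+ _); ring: h.
Qed.
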